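(* Let $G$ be a connected chordal graph which is not an atom (i.e. has at least one clique separator). If $G$ is a path graph, then for each clique separator $Q$ of $G$ the $Q$-attachedness graph of $G$ has no full antipodal triangle and contains no subgraph isomorphic (as a 2-edge-colored graph) to any graph in $\mathcal F_0$.
   Context: Graphs are finite and simple. A graph is a path graph if there are a tree $T$ and a bijection from its vertices to a collection of paths of $T$ such that two vertices are adjacent iff the vertex sets of the corresponding paths intersect. Chordal: no induced cycle of length $\ge4$. A clique is an inclusion-maximal set of pairwise adjacent vertices. A clique $Q$ of $G$ is a clique separator if $G-Q$ has at least two connected components; if their vertex sets are $V_1,\dots,V_s$, put $\gamma_i=G[V_i\cup Q]$ and $\Gamma_Q=\{\gamma_1,\dots,\gamma_s\}$. A relevant clique of $\gamma\in\Gamma_Q$ is a clique $K$ of the graph $\gamma$ with $K\cap Q\neq\emptyset$ and $K\neq Q$. An element $\gamma$ is a neighboring subgraph of a vertex $v$ if $v$ belongs to some relevant clique of $\gamma$; a set $W\subseteq\Gamma_Q$ is neighboring if there is $v\in Q$ such that every member of $W$ is a neighboring subgraph of $v$. Relations on $\Gamma_Q$: attachedness $\gamma\bowtie\gamma'$ iff there are relevant cliques $K$ of $\gamma$ and $K'$ of $\gamma'$ with $K\cap K'\cap Q\neq\emptyset$; dominance $\gamma\le\gamma'$ iff $\gamma\bowtie\gamma'$ and, for each relevant clique $K'$ of $\gamma'$, either $K\cap Q\subseteq K'\cap Q$ for every relevant clique $K$ of $\gamma$, or $K\cap K'\cap Q=\emptyset$ for every relevant clique $K$ of $\gamma$; antipodality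 $\gamma\leftrightarrow\gamma'$ iff there are relevant cliques $K$ of $\gamma$ and $K'$ of $\gamma'$ with $K\cap K'\cap Q\neq\emptyset$ and $K\cap Q$, $K'\cap Q$ inclusion-wise incomparable. By standing convention, elements $\gamma,\gamma'$ with $\gamma\le\gamma'$ and $\gamma'\le\gamma$ are identified, so $\le$ is a partial order. The $Q$-attachedness graph has vertex set $\Gamma_Q$ and an edge $\gamma\gamma'$ for each pair of distinct attached elements, colored antipodal if $\gamma\leftrightarrow\gamma'$ and dominance otherwise. A triangle is full if its vertex set is a neighboring set; a full antipodal triangle is a full triangle with all edges antipodal. 2-edge-colored graphs: $W^{(0)}_{2k+1}$ ($k\ge1$): hub $c$, rim $x_1,\dots,x_{2k+1}$, rim edges $x_ix_{i+1}$ (indices mod $2k+1$) antipodal, all spokes $cx_i$ dominance. $W^{(1)}_{2k+1}$ ($k\ge1$): same, except the spoke $cx_1$ is antipodal. $F_{2n+1}$ ($n\ge2$): vertices $c,x_1,\dots,x_{2n}$, edges $x_ix_{i+1}$ ($1\le i\le 2n-1$), $cx_1$, $cx_{2n}$ antipodal and $cx_i$ ($2\le i\le 2n-1$) dominance. $\mathcal F_0=\{W^{(0)}_{2k+1},W^{(1)}_{2k+1},F_{2n+1}: k\ge1,n\ge2\}$. A subgraph isomorphic to $F$ means an injective map of $V(F)$ into the vertex set sending each edge of $F$ to an edge of the same color. *)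

(* Defs.v *)
From mathcomp Require Import all_boot.
Set Implicit Arguments. Unset Strict Implicit. Unset Printing Implicit Defensive.

Section Graphs.
Variables (V : finType) (e : rel V).

Definition connected_graph : Prop := forall x y : V, connect e x y.

Definition induced_cycle (k : nat) (c : 'I_k -> V) : Prop :=
  injective c /\
  forall i j : 'I_k,
    e (c i) (c j) = ((val j == (val i).+1 %% k) || (val i == (val j).+1 %% k)).

Definition chordal : Prop :=
  forall (k : nat) (c : 'I_k -> V), 4 <= k -> ~ induced_cycle c.

Definition complete_in (W K : {set V}) : Prop :=
  K \subset W /\ forall x y, x \in K -> y \in K -> x != y -> e x y.

Definition maxclique_in (W K : {set V}) : Prop :=
  complete_in W K /\ forall K', complete_in W K' -> K \subset K' -> K' = K.

Definition maxclique (K : {set V}) : Prop := maxclique_in setT K.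

Definition avoidQ (Q : {set V}) : rel V :=
  [rel x y | [&& e x y, x \notin Q & y \notin Q]].

Definition compQ (Q : {set V}) (x : V) : {set V} :=
  [set y | (y \notin Q) && connect (avoidQ Q) x y].

(* Gamma_Q, each element gamma_i = G[V_i \cup Q] represented by V_i *)
Definition comps (Q : {set V}) : {set {set V}} :=
  [set C | [exists x, (x \notin Q) && (C == compQ Q x)]].

Definition clique_separator (Q : {set V}) : Prop :=
  maxclique Q /\ 1 < #|comps Q|.

Definition relevant (Q C K : {set V}) : Prop :=
  [/\ maxclique_in (C :|: Q) K, K :&: Q != set0 & K != Q].

Definition neighboring_sub (Q C : {set V}) (v : V) : Prop :=
  exists K, relevant Q C K /\ v \in K.

Definition attached (Q C C' : {set V}) : Prop :=
  exists K K', [/\ relevant Q C K, relevant Q C' K' & K :&: K' :&: Q != set0].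

Definition dominated (Q C C' : {set V}) : Prop :=
  attached Q C C' /\
  forall K', relevant Q C' K' ->
    (forall K, relevant Q C K -> K :&: Q \subset K' :&: Q) \/
    (forall K, relevant Q C K -> K :&: K' :&: Q = set0).

Definition antipodal (Q C C' : {set V}) : Prop :=
  exists K K', [/\ relevant Q C K, relevant Q C' K', K :&: K' :&: Q != set0,
                   ~~ (K :&: Q \subset K' :&: Q) & ~~ (K' :&: Q \subset K :&: Q)].

(* standing convention: mutually dominated elements are identified *)
Definition identified (Q C C' : {set V}) : Prop :=
  dominated Q C C' /\ dominated Q C' C.

Definition full_antipodal_triangle (Q : {set V}) : Prop :=
  exists C1 C2 C3 : {set V},
    [/\ C1 \in comps Q, C2 \in comps Q & C3 \in comps Q] /\
    [/\ ~ identified Q C1 C2, ~ identified Q C2 C3 & ~ identified Q C1 C3] /\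
    [/\ antipodal Q C1 C2, antipodal Q C2 C3 & antipodal Q C1 C3] /\
    [/\ attached Q C1 C2, attached Q C2 C3 & attached Q C1 C3] /\
    exists2 v, v \in Q &
      [/\ neighboring_sub Q C1 v, neighboring_sub Q C2 v & neighboring_sub Q C3 v].

(* 2-edge-coloured graphs: col a b = None (no edge), Some true (antipodal),
   Some false (dominance).  Subgraph isomorphic to it: *)
Definition contains_colored (W : finType) (col : W -> W -> option bool)
    (Q : {set V}) : Prop :=
  exists phi : W -> {set V},
    [/\ forall a, phi a \in comps Q,
        forall a b, a != b -> ~ identified Q (phi a) (phi b),
        forall a b, col a b = Some true ->
          attached Q (phi a) (phi b) /\ antipodal Q (phi a) (phi b)
      & forall a b, col a b = Some false ->
          attached Q (phi a) (phi b) /\ ~ antipodal Q (phi a) (phi b)].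

End Graphs.

Definition is_tree (U : finType) (f : rel U) : Prop :=
  symmetric f /\ irreflexive f /\ (forall x y, connect f x y) /\
  ~ (exists s : seq U, [/\ 3 <= size s, uniq s & cycle f s]).

Definition tree_path (U : finType) (f : rel U) (P : {set U}) : Prop :=
  exists s : seq U, [/\ s != [::], uniq s, sorted f s & P = [set x in s]].

Definition path_graph (V : finType) (e : rel V) : Prop :=
  exists (U : finType) (f : rel U) (P : V -> {set U}),
    [/\ is_tree f, injective P, forall v, tree_path f (P v)
      & forall x y, x != y -> e x y = (P x :&: P y != set0)].

(* the family F_0 ; vertex None is the hub c, Some i is x_(i+1) *)
Definition cyc_adj (n : nat) (i j : 'I_n) : bool :=
  (val j == (val i).+1 %% n) || (val i == (val j).+1 %% n).

Definition W0col (k : nat) (a b : option 'I_(k.*2.+1)) : option bool :=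
  match a, b with
  | Some i, Some j => if cyc_adj i j then Some true else None
  | None, Some _ | Some _, None => Some false
  | None, None => None
  end.

Definition W1col (k : nat) (a b : option 'I_(k.*2.+1)) : option bool :=
  match a, b with
  | Some i, Some j => if cyc_adj i j then Some true else None
  | None, Some j | Some j, None => Some (val j == 0)
  | None, None => None
  end.

Definition Fcol (n : nat) (a b : option 'I_(n.*2)) : option bool :=
  match a, b with
  | Some i, Some j =>
      if (val j == (val i).+1) || (val i == (val j).+1) then Some true else None
  | None, Some j | Some j, None => Some ((val j == 0) || (val j == (n.*2).-1))
  | None, None => None
  end.

(* Main.v *)
Require Import Defs.
From mathcomp Require Import all_boot.
From mathcomp Require Import zify.
From Stdlib Require Import Classical.
Ltac lia' :=
  repeat match goal with
  | H : is_true (leq _ _) |- _ => revert H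
  | H : @eq nat _ _ |- _ => revert H
  | H : ~ (@eq nat _ _) |- _ => revert H
  end;
  repeat match goal with H : _ |- _ => clear H end;
  intros; lia.
Set Implicit Arguments. Unset Strict Implicit. Unset Printing Implicit Defensive.

Section Tree.
Variables (U : finType) (f : rel U).
Hypothesis fsym : symmetric f.
Hypothesis firr : irreflexive f.
Hypothesis nocyc : ~ (exists s : seq U, [/\ 3 <= size s, uniq s & cycle f s]).

Definition cut (a b : U) : rel U :=
  [rel x y | f x y && ~~ (((x == a) && (y == b)) || ((x == b) && (y == a)))].
Definition avoid (z : U) : rel U := [rel u w | [&& f u w, u != z & w != z]].
Definition inside (X : {set U}) : rel U := [rel u w | [&& f u w, u \in X & w \in X]].
Definition conn (X : {set U}) := forall x y, x \in X -> y \in X -> connect (inside X) x y.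

Lemma cut_sym a b : connect_sym (cut a b).
Proof.
apply: sym_connect_sym => x y; rewrite /cut /= fsym.
by case: (f y x) => //=; rewrite orbC [(y == a) && _]andbC [(y == b) && _]andbC.
Qed.
Lemma avoid_sym z : connect_sym (avoid z).
Proof. by apply: sym_connect_sym => x y; rewrite /avoid /= fsym; case: (f y x) => //=; apply: andbC. Qed.
Lemma inside_sym X : connect_sym (inside X).
Proof. by apply: sym_connect_sym => x y; rewrite /inside /= fsym; case: (f y x) => //=; apply: andbC. Qed.

Lemma E a b : f a b -> ~~ connect (cut a b) a b.
Proof.
move=> fab; apply/negP => /connectP [p pp lp].
case: (shortenP pp) lp => p' pp' up' _ lp'.
apply: nocyc; exists (a :: p'); split => //.
  case: p' pp' up' lp' => [|x [|y p'']] /=.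
  - by move=> _ _ eab; move: fab; rewrite -eab firr.
  - rewrite andbT => /andP [] _ /negP + _ eb; rewrite eb !eqxx //.
  - by [].
rewrite /= rcons_path -lp' fsym fab andbT.
by apply: sub_path pp' => x y /andP [].
Qed.

Lemma seg (R : rel U) s x0 a c : a <= c -> 
  (forall k, a <= k -> k < c -> R (nth x0 s k) (nth x0 s k.+1)) ->
  connect R (nth x0 s a) (nth x0 s c).
Proof.
elim: c => [|c IH] ac H; first by move: ac; rewrite leqn0 => /eqP ->; exact: connect0.
case: (ltngtP a c.+1) ac => // [ac _ | -> _]; last exact: connect0.
apply: connect_trans (IH ac _) (connect1 (H _ _ _)) => // k ak kc.
by apply: H => //; apply: ltnW.
Qed.

Lemma sorted_step s x0 k : sorted f s -> k.+1 < size s -> f (nth x0 s k) (nth x0 s k.+1).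
Proof. by case: s => [|x p] //= /(pathP x0) H kp; apply: H. Qed.

Lemma Between s x0 a b c : sorted f s -> uniq s -> a < b -> b < c -> c < size s ->
  connect (avoid (nth x0 s b)) (nth x0 s a) (nth x0 s c) -> False.
Proof.
move=> ss us ab bc cs H.
case: b ab bc H => [//|b] ab bc H.
have bs : b.+1 < size s by lia'.
have nq i j : i < size s -> j < size s -> (nth x0 s i == nth x0 s j) = (i == j).
  by move=> *; apply: nth_uniq.
move/negP: (E (sorted_step x0 ss bs)); apply.
apply: (@connect_trans _ _ (nth x0 s a)).
  rewrite cut_sym; apply: seg; first lia'.
  move=> k ak kb; rewrite /cut /= sorted_step //; last lia'.
  by rewrite !nq; try lia'; apply/negP => /orP [] /andP [] /eqP ? /eqP ?; lia'.
apply: (@connect_trans _ _ (nth x0 s c)).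
  apply: connect_sub H => x y; rewrite /avoid /= => /and3P [fxy xb yb]; apply: connect1.
  by rewrite /cut /= fxy (negbTE xb) (negbTE yb) !andbF.
rewrite cut_sym; apply: seg; first lia'.
move=> k bk kc; rewrite /cut /= sorted_step //; last lia'.
by rewrite !nq; try lia'; apply/negP => /orP [] /andP [] /eqP ? /eqP ?; lia'.
Qed.


Lemma sub_cut (R : rel U) a b :
  (forall x y, R x y -> f x y && ((x != a) && (y != a) || (x != b) && (y != b))) ->
  forall x y, connect R x y -> connect (cut a b) x y.
Proof.
move=> H; apply: connect_sub => x y /H /andP [fxy hh]; apply: connect1.
rewrite /cut /= fxy /=; apply/negP => /orP [] /andP [] /eqP ? /eqP ?; subst;
  by move: hh; rewrite !eqxx /= ?andbF.
Qed.

Lemma seq_conn s x0 i j : sorted f s -> i < size s -> j < size s ->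
  connect (inside [set x in s]) (nth x0 s i) (nth x0 s j).
Proof.
move=> ss.
wlog ij : i j / i <= j.
  move=> W hi hj; case: (leqP i j) => ij; first exact: W.
  by rewrite inside_sym; apply: W => //; apply: ltnW.
move=> hi hj; apply: seg => // k ik kj.
by rewrite /inside /= !inE !mem_nth ?sorted_step //; apply: (leq_trans _ hj); lia'.
Qed.

Lemma tree_path_conn P : tree_path f P -> conn P.
Proof.
case=> s [_ us ss ->] x y; rewrite !inE => xs ys.
rewrite -(nth_index x xs) -(nth_index x ys).
by apply: seq_conn; rewrite ?index_mem.
Qed.

Lemma side s x0 i j it : sorted f s -> uniq s -> i < size s -> j < size s -> it < size s ->
  (i < it) && (j < it) || (it < i) && (it < j) ->
  connect (avoid (nth x0 s it)) (nth x0 s i) (nth x0 s j).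
Proof.
move=> ss us.
wlog ij : i j / i <= j.
  move=> W hi hj its H; case: (leqP i j) => ij; first exact: W.
  rewrite avoid_sym; apply: W => //; first exact: ltnW.
  by rewrite andbC [(it < j) && _]andbC.
move=> hi hj its H; apply: seg => // k ik kj.
rewrite /avoid /= sorted_step //; last lia'.
rewrite !nth_uniq //; try (apply: (leq_trans _ hj); lia').
case/orP: H => /andP [? ?]; apply/and3P; split => //; apply/eqP; lia'.
Qed.

Lemma three_sides Y t u1 u2 u3 : tree_path f Y -> t \in Y ->
  u1 \in Y -> u2 \in Y -> u3 \in Y -> u1 != t -> u2 != t -> u3 != t ->
  [|| connect (avoid t) u1 u2, connect (avoid t) u1 u3 | connect (avoid t) u2 u3].
Proof.
case=> s [_ us ss ->]; rewrite !inE => ts u1s u2s u3s n1 n2 n3.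
rewrite -(nth_index t ts) -(nth_index t u1s) -(nth_index t u2s) -(nth_index t u3s).
have ne : forall u, u \in s -> u != t -> index u s != index t s.
  by move=> u us' nut; apply/eqP => /(congr1 (nth t s)); rewrite !nth_index //; apply/eqP.
move: (ne _ u1s n1) (ne _ u2s n2) (ne _ u3s n3).
rewrite -!index_mem in ts u1s u2s u3s.
move=> h1 h2 h3.
case: (ltnP (index u1 s) (index t s)) => c1; case: (ltnP (index u2 s) (index t s)) => c2;
  case: (ltnP (index u3 s) (index t s)) => c3;
  first [ rewrite side //; lia' | rewrite [X in X || _]side //; lia
        | rewrite (@side s t (index u1 s) (index u3 s)) ?orbT //; lia
        | rewrite (@side s t (index u2 s) (index u3 s)) ?orbT //; lia ].
Qed.

Lemma first_hit (S : {set U}) p t : path f t p -> t \notin S -> last t p \in S ->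
  exists u g, [/\ f u g, g \in S, u \notin S &
     connect [rel x y | [&& f x y, x \notin S & y \notin S]] t u].
Proof.
elim: p t => [|x p IH] t /=; first by move=> _ /negP.
case/andP=> ftx pp tS; case: (boolP (x \in S)) => xS lS.
  by exists t, x; split => //; exact: connect0.
have [u [g [fug gS uS cc]]] := IH x pp xS lS.
exists u, g; split => //; apply: connect_trans cc; apply: connect1.
by rewrite /= ftx tS xS.
Qed.

Hypothesis fconn : forall x y, connect f x y.

Lemma gate (S : {set U}) t s0 : conn S -> t \notin S -> s0 \in S ->
  exists2 g, g \in S & forall X, conn X -> t \in X ->
     forall x, x \in X -> x \in S -> g \in X.
Proof.
move=> cS tS s0S; have /connectP [p pp lp] := fconn t s0.
have ls : last t p \in S by rewrite -lp.
have [u [g [fug gS uS cc]]] := first_hit pp tS ls.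
exists g => // X cX tX x xX xS; apply/negPn/negP => gX.
move/negP: (E fug); apply.
apply: (@connect_trans _ _ t).
  rewrite (@sub_cut [rel x y | [&& f x y, x \notin S & y \notin S]]) //.
    move=> a b /and3P [fab aS bS]; rewrite fab /=; apply/orP; right.
    by apply/andP; split; [apply: contraNneq aS => -> | apply: contraNneq bS => ->].
  have : connect [rel x y | [&& f x y, x \notin S & y \notin S]] u t; last by [].
  rewrite sym_connect_sym //; move=> a b /=; rewrite fsym; case: (f b a) => //=; apply: andbC.
apply: (@connect_trans _ _ x).
  apply: (@sub_cut (inside X)); last exact: cX.
  move=> a b /and3P [fab aS bS]; rewrite fab /=; apply/orP; right.
  by apply/andP; split; apply/eqP => E'; [move: aS | move: bS]; rewrite E' (negbTE gX).
apply: (@sub_cut (inside S)); last exact: cS.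
move=> a b /and3P [fab aS bS]; rewrite fab /=; apply/orP; left.
by apply/andP; split; apply/eqP => E'; [move: aS | move: bS]; rewrite E' (negbTE uS).
Qed.


Lemma ivt (X : pred U) s x0 a m : a <= m -> X (nth x0 s a) -> ~~ X (nth x0 s m) ->
  exists i, [/\ a <= i, i < m, X (nth x0 s i) & ~~ X (nth x0 s i.+1)].
Proof.
elim: m => [|m IH] am Xa Xm; first by move: am; rewrite leqn0 => /eqP ?; subst; rewrite Xa in Xm.
case: (ltngtP a m.+1) am => // [am _ | ea _]; last by subst; rewrite Xa in Xm.
case: (boolP (X (nth x0 s m))) => Xm'.
  by exists m; split.
have [i [ai im Xi Xi1]] := IH am Xa Xm'.
by exists i; split => //; apply: ltnW.
Qed.

Lemma helly (I : finType) (Qs : {set I}) (Pf : I -> {set U}) q0 :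
  q0 \in Qs -> (forall q, q \in Qs -> tree_path f (Pf q)) ->
  (forall q q', q \in Qs -> q' \in Qs -> Pf q :&: Pf q' != set0) ->
  exists t, forall q, q \in Qs -> t \in Pf q.
Proof.
move=> q0Q tp inter.
have [s0 [_ us ss E0]] := tp _ q0Q.
have [x0 _] := set0Pn _ (inter _ _ q0Q q0Q).
pose l q := find (mem (Pf q)) s0.
have lhas q : q \in Qs -> has (mem (Pf q)) s0.
  move=> qQ; have [z] := set0Pn _ (inter _ _ qQ q0Q).
  by rewrite inE E0 inE => /andP [zq zs]; apply/hasP; exists z.
have lsz q : q \in Qs -> l q < size s0 by move=> qQ; rewrite -has_find; apply: lhas.
have lX q : q \in Qs -> nth x0 s0 (l q) \in Pf q by move=> qQ; apply: (nth_find x0 (lhas _ qQ)).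
have lB q i : i < l q -> nth x0 s0 i \notin Pf q by move=> il; move: (before_find x0 il); rewrite /= => ->.
clearbody l.
case: (arg_maxnP l q0Q) => q1 q1Q q1max.
exists (nth x0 s0 (l q1)) => q' q'Q.
apply/negPn/negP => tq.
have l'm : l q' <= l q1 by apply: q1max.
have [i [ai im Xi Xi1]] := @ivt (mem (Pf q')) s0 x0 _ _ l'm (lX _ q'Q) tq.
have Xi1' : nth x0 s0 i \notin Pf q1 by apply: lB.
have m1 := lsz _ q1Q.
have isz : i.+1 < size s0 by lia'.
have nq a b : a < size s0 -> b < size s0 -> (nth x0 s0 a == nth x0 s0 b) = (a == b).
  by move=> *; apply: nth_uniq.
move/negP: (E (sorted_step x0 ss isz)); apply; rewrite cut_sym.
have [z] := set0Pn _ (inter _ _ q1Q q'Q); rewrite inE => /andP [z1 z2].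
apply: (@connect_trans _ _ (nth x0 s0 (l q1))).
  apply: seg => // k ik km; rewrite /cut /= sorted_step //; last by lia'.
  by rewrite !nq; lia'.
apply: (@connect_trans _ _ z).
  apply: (@sub_cut (inside (Pf q1))); last first.
    by apply: tree_path_conn => //; [apply: tp | apply: lX].
  move=> a b /and3P [fab aS bS]; rewrite fab /=; apply/orP; left.
  by apply/andP; split; apply/eqP => E'; [move: aS | move: bS]; rewrite E' (negbTE Xi1').
apply: (@sub_cut (inside (Pf q'))); last by apply: tree_path_conn => //; apply: tp.
move=> a b /and3P [fab aS bS]; rewrite fab /=; apply/orP; right.
by apply/andP; split; apply/eqP => E'; [move: aS | move: bS]; rewrite E' (negbTE (Xi1 : nth x0 s0 i.+1 \notin Pf q')).
Qed.


Lemma BetweenS s x0 a b c : sorted f s -> uniq s -> a < size s -> c < size s ->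
  (a < b < c) || (c < b < a) ->
  connect (avoid (nth x0 s b)) (nth x0 s a) (nth x0 s c) -> False.
Proof.
move=> ss us ha hc /orP [] /andP [ab bc] H.
  exact: (Between ss us ab bc hc H).
by rewrite avoid_sym in H; exact: (Between ss us ab bc ha H).
Qed.

Lemma mid3 x y z : x != y -> y != z -> x != z ->
  [|| (y < x < z) || (z < x < y), (x < y < z) || (z < y < x) | (x < z < y) || (y < z < x)].
Proof.
move=> /eqP ? /eqP ? /eqP ?.
case: (ltngtP x y) => h1; case: (ltngtP y z) => h2; case: (ltngtP x z) => h3;
  rewrite ?h1 ?h2 ?h3 /= ?orbT //; lia'.
Qed.

Lemma inside_avoid (X : {set U}) (z : U) : z \notin X -> forall x y : U, connect (inside X) x y -> connect (avoid z) x y.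
Proof.
move=> zX; apply: connect_sub => x y /and3P [fxy xX yX]; apply: connect1.
by rewrite /avoid /= fxy /=; apply/andP; split; apply/eqP => e; move: zX; rewrite -e ?xX ?yX.
Qed.

Lemma meetP (X Y : {set U}) : X :&: Y != set0 -> exists2 x, x \in X & x \in Y.
Proof. by case/set0Pn => x; rewrite inE => /andP [] *; exists x. Qed.

Lemma G (t : U) (A A' Y Y1 Y2 : {set U}) : conn A -> conn A' -> t \notin A -> t \notin A' ->
  (exists a a', [/\ a \in A, a' \in A' & connect (avoid t) a a']) ->
  tree_path f Y -> tree_path f Y1 -> tree_path f Y2 -> t \in Y -> t \in Y1 -> t \in Y2 ->
  Y :&: A != set0 -> Y :&: A' != set0 -> Y1 :&: A != set0 -> Y1 :&: A' = set0 ->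
  Y2 :&: A' != set0 -> Y2 :&: A = set0 -> False.
Proof.
move=> cA cA' tA tA' [a [a' [aA a'A' aa']]] pY pY1 pY2 tY tY1 tY2 YA YA' Y1A Y1A' Y2A' Y2A.
have [g gA gP] := gate cA tA aA.
have [g' g'A g'P] := gate cA' tA' a'A'.
have [y1 y1Y y1A] := meetP YA; have gY := gP _ (tree_path_conn pY) tY _ y1Y y1A.
have [y2 y2Y y2A] := meetP Y1A; have gY1 := gP _ (tree_path_conn pY1) tY1 _ y2Y y2A.
have [y3 y3Y y3A] := meetP YA'; have g'Y := g'P _ (tree_path_conn pY) tY _ y3Y y3A.
have [y4 y4Y y4A] := meetP Y2A'; have g'Y2 := g'P _ (tree_path_conn pY2) tY2 _ y4Y y4A.
have gY2 : g \notin Y2.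
  apply/negP => h; have : g \in Y2 :&: A by rewrite inE h gA.
  by rewrite Y2A inE.
have g'Y1 : g' \notin Y1.
  apply/negP => h; have : g' \in Y1 :&: A' by rewrite inE h g'A.
  by rewrite Y1A' inE.
have bran : connect (avoid t) g g'.
  apply: (connect_trans (inside_avoid tA (cA _ _ gA aA))).
  exact: (connect_trans aa' (inside_avoid tA' (cA' _ _ a'A' g'A))).
case: pY tY gY g'Y => s [_ us ss ->]; rewrite !inE => ts gs g's.
have ne u v : u \in s -> v \in s -> u != v -> index u s != index v s.
  move=> us' vs nuv; apply/eqP => /(congr1 (nth t s)); rewrite !nth_index //.
  by apply/eqP.
have tg : t != g by apply/eqP => e; move: tA; rewrite e gA.
have tg' : t != g' by apply/eqP => e; move: tA'; rewrite e g'A.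
have gg' : g != g' by apply/eqP => e; move: gY2; rewrite e g'Y2.
have bt : index t s < size s by rewrite index_mem.
have bg : index g s < size s by rewrite index_mem.
have bg' : index g' s < size s by rewrite index_mem.
case/or3P: (mid3 (ne _ _ ts gs tg) (ne _ _ gs g's gg') (ne _ _ ts g's tg')) => H.
  apply: (BetweenS (x0:=t) ss us bg bg' H).
  by rewrite !nth_index.
- apply: (BetweenS (x0:=t) ss us bt bg' H); rewrite !nth_index //.
  exact: (inside_avoid gY2 (tree_path_conn pY2 tY2 g'Y2)).
- apply: (BetweenS (x0:=t) ss us bt bg H); rewrite !nth_index //.
  exact: (inside_avoid g'Y1 (tree_path_conn pY1 tY1 gY1)).
Qed.

End Tree.




Set Implicit Arguments. Unset Strict Implicit. Unset Printing Implicit Defensive.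

Section Cliques.
Variables (V : finType) (e : rel V).
Hypothesis e_sym : symmetric e.
Hypothesis e_irr : irreflexive e.

Definition cb (W K : {set V}) : bool :=
  (K \subset W) && [forall x in K, forall y in K, (x != y) ==> e x y].

Lemma cbP W K : reflect (complete_in e W K) (cb W K).
Proof.
apply: (iffP andP) => [[sKW /forall_inP H] | [sKW H]]; split => //.
  by move=> x y xK yK xy; move: (H x xK) => /forall_inP /(_ y yK) /implyP; apply.
by apply/forall_inP => x xK; apply/forall_inP => y yK; apply/implyP; apply: H.
Qed.

Lemma extend W K0 : complete_in e W K0 -> exists K, maxclique_in e W K /\ K0 \subset K.
Proof.
move=> /cbP c0.
pose Pr : pred {set V} := fun K => cb W K && (K0 \subset K).
have P0 : Pr K0 by rewrite /Pr /= c0 subxx.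
case: (@arg_maxnP _ K0 Pr (fun K : {set V} => #|K|) P0) => K /andP [cK sK] Kmax.
exists K; split => //; split; first exact/cbP.
move=> K' /cbP cK' sKK'; apply/eqP; rewrite eq_sym eqEcard sKK' /=.
by apply: Kmax; rewrite /Pr cK' (subset_trans sK sKK').
Qed.

Lemma maxout W K v : maxclique_in e W K -> v \in W -> v \notin K -> exists2 c, c \in K & ~~ e v c.
Proof.
move=> [[sKW cK] mK] vW vK; apply: NNPP => H.
have H' : forall c, c \in K -> e v c.
  by move=> c cK'; apply: negbNE; apply/negP => hc; apply: H; exists c.
have : complete_in e W (v |: K).
  split.
    by apply/subsetP => x /setU1P [-> // | xK]; apply: (subsetP sKW).
  move=> x y /setU1P [-> | xK] /setU1P [-> | yK] xy.
  - by rewrite eqxx in xy.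
  - exact: H'.
  - by rewrite e_sym; apply: H'.
  - exact: cK.
move=> /mK /(_ (subsetUr _ _)) E; move: vK; rewrite -E setU11 //.
Qed.

End Cliques.


Lemma par_odd (k : nat) (b : nat -> bool) :
  (forall i, i < k.*2.+1 -> ~~ (b i && b (i.+1 %% k.*2.+1))) ->
  exists i, [/\ i < k.*2.+1, ~~ b i & ~~ b (i.+1 %% k.*2.+1)].
Proof.
move=> H; apply: NNPP => N.
have H2 i : i < k.*2.+1 -> b i || b (i.+1 %% k.*2.+1).
  move=> ik; apply/negPn/negP => /norP [h1 h2]; apply: N; exists i; split => //.
have step i : i < k.*2 -> b i.+1 = ~~ b i.
  move=> ik; have m : i.+1 %% k.*2.+1 = i.+1 by apply: modn_small; lia.
  have ik1 : i < k.*2.+1 by lia.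
  move: (H i ik1) (H2 i ik1); rewrite m.
  by case: (b i); case: (b i.+1).
have inv i : i <= k.*2 -> b i = b 0 (+) odd i.
  elim: i => [|i IH] ik; first by rewrite addbF.
  by rewrite step; [rewrite IH /=; [case: (b 0); case: (odd i) | lia] | lia].
have m : (k.*2).+1 %% k.*2.+1 = 0 by apply: modnn.
move: (H _ (leqnn _)) (H2 _ (leqnn _)); rewrite m inv // odd_double addbF.
by case: (b 0).
Qed.

Lemma par_even (n : nat) (b : nat -> bool) : 0 < n -> b 0 = false -> b (n.*2.-1) = false ->
  (forall i, i.+1 < n.*2 -> ~~ (b i && b i.+1)) ->
  exists i, [/\ i.+1 < n.*2, ~~ b i & ~~ b i.+1].
Proof.
move=> n0 b0 bN H; apply: NNPP => N.
have step i : i.+1 < n.*2 -> b i.+1 = ~~ b i.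
  move=> ik; have h2 : b i || b i.+1.
    apply/negPn/negP => /norP [h1 h2]; apply: N; exists i; split => //.
  by move: (H i ik) h2; case: (b i); case: (b i.+1).
have inv i : i < n.*2 -> b i = odd i.
  elim: i => [|i IH] ik; first by rewrite b0.
  by rewrite step // IH //; lia.
have : b (n.*2.-1) = odd (n.*2.-1) by apply: inv; lia.
rewrite bN; case: n n0 {N H step inv b0 bN} => // n _.
by rewrite doubleS /= odd_double.
Qed.

Section Main.
Variables (V : finType) (e : rel V).
Hypothesis e_sym : symmetric e.
Hypothesis e_irr : irreflexive e.
Variables (U : finType) (f : rel U) (P : V -> {set U}).
Hypothesis fsym : symmetric f.
Hypothesis firr : irreflexive f.
Hypothesis nocyc : ~ (exists s : seq U, [/\ 3 <= size s, uniq s & cycle f s]).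
Hypothesis fconn : forall x y, connect f x y.
Hypothesis tp : forall v, tree_path f (P v).
Hypothesis hP : forall x y, x != y -> e x y = (P x :&: P y != set0).
Variable Q : {set V}.
Hypothesis hQ : maxclique e Q.
Variable t : U.
Hypothesis tQ : forall q, q \in Q -> t \in P q.

Lemma Pne v : exists u, u \in P v.
Proof. by case: (tp v) => [[|x s] [//= _ _ _ ->]]; exists x; rewrite inE mem_head. Qed.

Lemma pconn v : conn f (P v).
Proof. exact: tree_path_conn. Qed.

Lemma adjP x y : e x y -> P x :&: P y != set0.
Proof. by move=> exy; rewrite -hP //; apply: contraTneq exy => ->; rewrite e_irr. Qed.

Lemma nadjP x y : x != y -> ~~ e x y -> P x :&: P y = set0.
Proof. by move=> xy; rewrite hP // negbK => /eqP. Qed.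

Lemma Qc x y : x \in Q -> y \in Q -> x != y -> e x y.
Proof. by case: hQ => [[_ H] _]; apply: H. Qed.

Lemma B1 c : c \notin Q -> t \notin P c.
Proof.
move=> cQ; apply/negP => tc; move/negP: cQ; apply.
case: hQ => cQ' mQ.
have : complete_in e setT (c |: Q).
  split; first exact: subsetT.
  move=> x y /setU1P [-> | xK] /setU1P [-> | yK] xy.
  - by rewrite eqxx in xy.
  - by rewrite hP //; apply/set0Pn; exists t; rewrite inE tc tQ.
  - by rewrite hP //; apply/set0Pn; exists t; rewrite inE tc tQ.
  - exact: Qc.
by move=> /mQ /(_ (subsetUr _ _)) <-; rewrite setU11.
Qed.

Definition TC (C : {set V}) : {set U} := \bigcup_(c in C) P c.

Lemma compP C : C \in comps e Q -> exists2 x, x \notin Q & C = compQ e Q x.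
Proof. by rewrite inE => /existsP [x /andP [xQ /eqP ->]]; exists x. Qed.

Lemma CnQ C c : C \in comps e Q -> c \in C -> c \notin Q.
Proof. by case/compP => x _ ->; rewrite inE => /andP []. Qed.

Lemma TCt C : C \in comps e Q -> t \notin TC C.
Proof.
move=> CC; apply/bigcupP => [[c cC]]; apply/negP; apply: B1; exact: CnQ CC cC.
Qed.

Lemma inside_mono (X Y : {set U}) : X \subset Y ->
  forall x y, connect (inside f X) x y -> connect (inside f Y) x y.
Proof.
move=> sXY; apply: connect_sub => x y /and3P [fxy xX yX]; apply: connect1.
by rewrite /inside /= fxy !(subsetP sXY).
Qed.

Lemma TCconn C : C \in comps e Q -> conn f (TC C).
Proof.
case/compP => x xQ EC.
have sub c : c \in C -> P c \subset TC C.
  by move=> cC; apply/subsetP => u uc; apply/bigcupP; exists c.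
have reach : forall p a, path (avoidQ e Q) a p -> a \in C ->
    forall u w, u \in P a -> w \in P (last a p) -> connect (inside f (TC C)) u w.
  elim=> [|b p IH] a /=.
    by move=> _ aC u w ua wa; apply: inside_mono (sub _ aC) _ _ (pconn ua wa).
  case/andP => /and3P [eab aQ bQ] pp aC u w ua wl.
  have bC : b \in C.
    have : a \in compQ e Q x by rewrite -EC.
    rewrite EC !inE bQ => /andP [_ xa] /=.
    by apply: connect_trans xa (connect1 _); rewrite /avoidQ /= eab aQ bQ.
  have [z] := set0Pn _ (adjP eab); rewrite inE => /andP [za zb].
  apply: connect_trans (IH _ pp bC _ _ zb wl).
  exact: inside_mono (sub _ aC) _ _ (pconn ua za).
have xC : x \in C by rewrite EC inE xQ connect0.
have [y0 y0x] := Pne x.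
have fromx c w : c \in C -> w \in P c -> connect (inside f (TC C)) y0 w.
  move=> cC wc; have : c \in compQ e Q x by rewrite -EC.
  rewrite inE => /andP [_ /connectP [p pp lp]].
  by apply: (reach p x) => //; rewrite -lp.
move=> u w /bigcupP [c1 c1C uc1] /bigcupP [c2 c2C wc2].
apply: connect_trans (fromx _ _ c2C wc2).
rewrite inside_sym //; exact: fromx c1C uc1.
Qed.

Definition brb (C C' : {set V}) : bool :=
  [exists u, exists u', [&& u \in TC C, u' \in TC C' & connect (avoid f t) u u']].

Lemma brbI C C' u u' : u \in TC C -> u' \in TC C' -> connect (avoid f t) u u' -> brb C C'.
Proof. by move=> *; apply/existsP; exists u; apply/existsP; exists u'; apply/and3P. Qed.

Lemma TC_avoid C u w : C \in comps e Q -> u \in TC C -> w \in TC C -> connect (avoid f t) u w.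
Proof. by move=> CC uC wC; apply: inside_avoid (TCt CC) _ _ (TCconn CC uC wC). Qed.

Lemma brb_all C C' u u' : C \in comps e Q -> C' \in comps e Q -> brb C C' ->
  u \in TC C -> u' \in TC C' -> connect (avoid f t) u u'.
Proof.
move=> CC CC' /existsP [v /existsP [v' /and3P [vC vC' vv']]] uC uC'.
apply: connect_trans (TC_avoid CC uC vC) _.
exact: connect_trans vv' (TC_avoid CC' vC' uC').
Qed.

Lemma brb_sym C C' : brb C C' -> brb C' C.
Proof.
move=> /existsP [v /existsP [v' /and3P [vC vC' vv']]].
by apply: (brbI vC' vC); rewrite (avoid_sym fsym).
Qed.

Lemma brb_trans A B C : B \in comps e Q -> brb A B -> brb B C -> brb A C.
Proof.
move=> BB /existsP [a /existsP [b /and3P [aA bB ab]]] /existsP [b' /existsP [c /and3P [bB' cC bc]]].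
apply: (brbI aA cC); apply: connect_trans ab _; apply: (connect_trans _ bc).
exact: TC_avoid BB bB bB'.
Qed.

Lemma Ksub C K : maxclique_in e (C :|: Q) K -> forall v, v \in K -> v \in C :|: Q.
Proof. by case=> [[sK _] _] v; apply: (subsetP sK). Qed.

Lemma Kcomp C K : maxclique_in e (C :|: Q) K -> forall x y, x \in K -> y \in K -> x != y -> e x y.
Proof. by case=> [[_ H] _]. Qed.

Lemma Knot C K : maxclique_in e (C :|: Q) K -> K != Q -> exists2 c, c \in K & c \notin Q.
Proof.
move=> mK KQ; apply: NNPP => H; move/negP: KQ; apply.
have sKQ : K \subset Q.
  apply/subsetP => c cK; apply: negbNE; apply/negP => cQ; apply: H; exists c => //.
have cQ : complete_in e (C :|: Q) Q.
  by split; [exact: subsetUr | move=> *; apply: Qc].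
by case: mK => _ /(_ _ cQ sKQ) ->.
Qed.

Lemma R1 C K v : C \in comps e Q -> relevant e Q C K -> v \in K -> v \in Q ->
  exists2 c, c \in C & e v c.
Proof.
move=> CC [mK _ KQ] vK vQ; have [c cK cQ] := Knot mK KQ.
have cC : c \in C by move: (Ksub mK cK); rewrite inE (negbTE cQ) orbF.
exists c => //; apply: (Kcomp mK) => //; apply: contraNneq cQ => <-.
exact: vQ.
Qed.

Lemma meetTC (C : {set V}) v c : c \in C -> e v c -> exists2 u, u \in P v & u \in TC C.
Proof.
move=> cC evc; have [u] := set0Pn _ (adjP evc); rewrite inE => /andP [uv uc].
by exists u => //; apply/bigcupP; exists c.
Qed.

Lemma three C1 C2 C3 q : C1 \in comps e Q -> C2 \in comps e Q -> C3 \in comps e Q -> q \in Q ->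
  (exists2 c, c \in C1 & e q c) -> (exists2 c, c \in C2 & e q c) -> (exists2 c, c \in C3 & e q c) ->
  [|| brb C1 C2, brb C1 C3 | brb C2 C3].
Proof.
move=> CC1 CC2 CC3 qQ [c1 c1C e1] [c2 c2C e2] [c3 c3C e3].
have [u1 u1q u1C] := meetTC c1C e1.
have [u2 u2q u2C] := meetTC c2C e2.
have [u3 u3q u3C] := meetTC c3C e3.
have nt C u : C \in comps e Q -> u \in TC C -> u != t.
  by move=> CC uC; apply: contraNneq (TCt CC) => <-.
case/or3P: (three_sides fsym (tp q) (tQ qQ) u1q u2q u3q (nt _ _ CC1 u1C) (nt _ _ CC2 u2C) (nt _ _ CC3 u3C)) => H.
- by rewrite (brbI u1C u2C H).
- by rewrite (brbI u1C u3C H) orbT.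
- by rewrite (brbI u2C u3C H) !orbT.
Qed.

Lemma antip_br C C' : C \in comps e Q -> C' \in comps e Q -> antipodal e Q C C' -> ~~ brb C C'.
Proof.
move=> CC CC' [K [K' [rK rK' KK' n1 n2]]]; apply/negP => br.
have [q] := set0Pn _ KK'; rewrite !inE => /andP [/andP [qK qK'] qQ].
case/subsetPn: n1 => q1; rewrite !inE => /andP [q1K q1Q]; rewrite q1Q andbT => q1K'.
case/subsetPn: n2 => q2; rewrite !inE => /andP [q2K' q2Q]; rewrite q2Q andbT => q2K.
case: (rK) => [mK _ _]; case: (rK') => [mK' _ _].
have h1 : q1 \in C' :|: Q by rewrite inE q1Q orbT.
have h2 : q2 \in C :|: Q by rewrite inE q2Q orbT.
have [c' c'K' nc'] := maxout e_sym mK' h1 q1K'.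
have [c cK nc] := maxout e_sym mK h2 q2K.
have c'Q : c' \notin Q.
  apply/negP => c'Q; move/negP: nc'; apply.
  by apply: Qc => //; apply/eqP => E; move: q1K'; rewrite E c'K'.
have cQ : c \notin Q.
  apply/negP => cQ; move/negP: nc; apply.
  by apply: Qc => //; apply/eqP => E; move: q2K; rewrite E cK.
have cC : c \in C by move: (Ksub mK cK); rewrite inE (negbTE cQ) orbF.
have c'C : c' \in C' by move: (Ksub mK' c'K'); rewrite inE (negbTE c'Q) orbF.
have neq x y : x \in Q -> y \notin Q -> x != y by move=> xQ yQ; apply: contraNneq yQ => <-.
have [a ac] := Pne c; have [a' ac'] := Pne c'.
have aT : a \in TC C by apply/bigcupP; exists c.
have aT' : a' \in TC C' by apply/bigcupP; exists c'.
apply: (G fsym firr nocyc fconn (t:=t) (A:=P c) (A':=P c') (Y:=P q) (Y1:=P q1) (Y2:=P q2)).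
- exact: pconn.
- exact: pconn.
- exact: B1.
- exact: B1.
- by exists a, a'; split => //; apply: brb_all br aT aT'.
- exact: tp.
- exact: tp.
- exact: tp.
- exact: tQ.
- exact: tQ.
- exact: tQ.
- by apply: adjP; apply: (Kcomp mK) => //; apply: neq.
- by apply: adjP; apply: (Kcomp mK') => //; apply: neq.
- by apply: adjP; apply: (Kcomp mK) => //; apply: neq.
- by apply: nadjP => //; apply: neq.
- by apply: adjP; apply: (Kcomp mK') => //; apply: neq.
- by apply: nadjP => //; apply: neq.
Qed.


Definition adjC (C : {set V}) q := exists2 c, c \in C & e q c.

Lemma top C q0 : C \in comps e Q -> q0 \in Q -> adjC C q0 ->
  exists K, relevant e Q C K /\ forall q, q \in Q -> adjC C q -> q \in K.
Proof.
move=> CC q0Q a0.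
have [x xQ EC] := compP CC.
have xC : x \in C by rewrite EC inE xQ connect0.
have [y0 y0x] := Pne x.
have y0T : y0 \in TC C by apply/bigcupP; exists x.
have [g gT gP] := gate fsym firr nocyc fconn (TCconn CC) (TCt CC) y0T.
pose K0 := [set v | (v \in C :|: Q) && (g \in P v)].
have cK0 : complete_in e (C :|: Q) K0.
  split; first by apply/subsetP => v; rewrite inE => /andP [].
  move=> v w; rewrite !inE => /andP [_ gv] /andP [_ gw] vw.
  by rewrite hP //; apply/set0Pn; exists g; rewrite inE gv gw.
have [K [mK sK]] := extend cK0.
have key q : q \in Q -> adjC C q -> q \in K0.
  move=> qQ [c cC eqc]; have [u uq uT] := meetTC cC eqc.
  rewrite inE inE qQ orbT /=.
  exact: gP _ (@pconn q) (tQ qQ) _ uq uT.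
exists K; split; last by move=> q qQ aq; apply: (subsetP sK); apply: key.
split => //.
  by apply/set0Pn; exists q0; rewrite inE (subsetP sK _ (key _ q0Q a0)) q0Q.
case/bigcupP: gT => c0 c0C gc0.
have c0K : c0 \in K by apply: (subsetP sK); rewrite inE gc0 inE c0C.
by apply/eqP => E; move: c0K; rewrite E; apply/negP; apply: CnQ CC c0C.
Qed.

Lemma att_adj C C' : C \in comps e Q -> C' \in comps e Q -> attached e Q C C' ->
  exists q, [/\ q \in Q, adjC C q & adjC C' q].
Proof.
move=> CC CC' [K [K' [rK rK' KK']]].
have [q] := set0Pn _ KK'; rewrite !inE => /andP [/andP [qK qK'] qQ].
by exists q; split => //; [apply: R1 CC rK qK qQ | apply: R1 CC' rK' qK' qQ].
Qed.

Lemma Lkey C Y Z : C \in comps e Q -> Y \in comps e Q -> Z \in comps e Q ->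
  ~~ brb C Y -> ~~ brb C Z -> ~~ brb Y Z ->
  attached e Q C Y -> attached e Q C Z -> attached e Q Y Z -> ~ antipodal e Q C Y -> False.
Proof.
move=> CC CY CZ b1 b2 b3 aCY aCZ aYZ nant.
have [q [qQ qC qY]] := att_adj CC CY aCY.
have [q' [q'Q q'C q'Z]] := att_adj CC CZ aCZ.
have [q'' [q''Q q''Y q''Z]] := att_adj CY CZ aYZ.
have [Mc [rMc Mc_all]] := top CC qQ qC.
have [My [rMy My_all]] := top CY qQ qY.
have contra3 r : r \in Q -> adjC C r -> adjC Y r -> adjC Z r -> False.
  move=> rQ h1 h2 h3; case/or3P: (three CC CY CZ rQ h1 h2 h3) => h.
  - by rewrite h in b1.
  - by rewrite h in b2.
  - by rewrite h in b3.
case: (boolP (Mc :&: Q \subset My :&: Q)) => s1.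
  have : q' \in My :&: Q by apply: (subsetP s1); rewrite inE q'Q (Mc_all _ q'Q q'C).
  rewrite inE => /andP [q'My _].
  exact: contra3 q'Q q'C (R1 CY rMy q'My q'Q) q'Z.
case: (boolP (My :&: Q \subset Mc :&: Q)) => s2.
  have : q'' \in Mc :&: Q by apply: (subsetP s2); rewrite inE q''Q (My_all _ q''Q q''Y).
  rewrite inE => /andP [q''Mc _].
  exact: contra3 q''Q (R1 CC rMc q''Mc q''Q) q''Y q''Z.
apply: nant; exists Mc, My; split => //.
by apply/set0Pn; exists q; rewrite !inE (Mc_all _ qQ qC) (My_all _ qQ qY) qQ.
Qed.

Lemma no_triangle : ~ full_antipodal_triangle e Q.
Proof.
move=> [C1 [C2 [C3 [[h1 h2 h3] [_ [[a12 a23 a13] [_ [v vQ [n1 n2 n3]]]]]]]]].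
have adjn C : C \in comps e Q -> neighboring_sub e Q C v -> adjC C v.
  by move=> CC [K [rK vK]]; apply: R1 CC rK vK vQ.
case/or3P: (three h1 h2 h3 vQ (adjn _ h1 n1) (adjn _ h2 n2) (adjn _ h3 n3)) => h.
- by move: (antip_br h1 h2 a12); rewrite h.
- by move: (antip_br h1 h3 a13); rewrite h.
- by move: (antip_br h2 h3 a23); rewrite h.
Qed.

Lemma wheel k (col : option 'I_(k.*2.+1) -> option 'I_(k.*2.+1) -> option bool) :
  (forall i j : 'I_(k.*2.+1), cyc_adj i j -> col (Some i) (Some j) = Some true) ->
  (forall j, exists b, col None (Some j) = Some b) ->
  (forall i j : 'I_(k.*2.+1), cyc_adj i j ->
     (col None (Some i) == Some false) || (col None (Some j) == Some false)) ->
  ~ contains_colored e col Q.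
Proof.
move=> rim spk dom [phi [hc _ ha hd]].
pose H := phi None.
have attS j : attached e Q H (phi (Some j)).
  by case: (spk j) => [[] E]; [exact: (ha _ _ E).1 | exact: (hd _ _ E).1].
pose b i := [exists j : 'I_(k.*2.+1), (val j == i) && brb H (phi (Some j))].
have bE (j : 'I_(k.*2.+1)) : b j = brb H (phi (Some j)).
  apply/existsP/idP => [[j' /andP [/eqP /val_inj -> //]] | h]; by exists j; rewrite eqxx.
have npos : 0 < k.*2.+1 by [].
pose sc (i : 'I_(k.*2.+1)) : 'I_(k.*2.+1) := Ordinal (ltn_pmod i.+1 npos).
have cyc1 i : cyc_adj i (sc i) by rewrite /cyc_adj /= eqxx.
have cyc2 i : cyc_adj (sc i) i by rewrite /cyc_adj /= eqxx orbT.
have nb i : ~~ brb (phi (Some i)) (phi (Some (sc i))).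
  exact: antip_br (hc _) (hc _) ((ha _ _ (rim _ _ (cyc1 i))).2).
have [i [ilt nb1 nb2]] : exists i, [/\ i < k.*2.+1, ~~ b i & ~~ b (i.+1 %% k.*2.+1)].
  apply: par_odd => i ilt; pose oi := Ordinal ilt.
  rewrite -[i]/(val oi) -[i.+1 %% _]/(val (sc oi)) !bE.
  apply/negP => /andP [h1 h2]; move/negP: (nb oi); apply.
  exact: brb_trans (hc None) (brb_sym h1) h2.
pose oi := Ordinal ilt.
move: nb1 nb2; rewrite -[i]/(val oi) -[i.+1 %% _]/(val (sc oi)) !bE => nb1 nb2.
case/orP: (dom _ _ (cyc1 oi)) => /eqP hdm.
- exact: (Lkey (hc None) (hc (Some oi)) (hc (Some (sc oi))) nb1 nb2 (nb oi) (attS _) (attS _)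
     ((ha _ _ (rim _ _ (cyc1 oi))).1) ((hd _ _ hdm).2)).
- have nb' : ~~ brb (phi (Some (sc oi))) (phi (Some oi)).
    exact: antip_br (hc _) (hc _) ((ha _ _ (rim _ _ (cyc2 oi))).2).
  exact: (Lkey (hc None) (hc (Some (sc oi))) (hc (Some oi)) nb2 nb1 nb' (attS _) (attS _)
     ((ha _ _ (rim _ _ (cyc2 oi))).1) ((hd _ _ hdm).2)).
Qed.

Lemma fan n : 2 <= n -> ~ contains_colored e (@Fcol n) Q.
Proof.
move=> n2 [phi [hc _ ha hd]].
pose H := phi None.
have attS j : attached e Q H (phi (Some j)).
  case E : (Fcol None (Some j)) => [[]|]; first exact: (ha _ _ E).1; first exact: (hd _ _ E).1.
  by move: E; rewrite /Fcol.
pose b i := [exists j : 'I_(n.*2), (val j == i) && brb H (phi (Some j))].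
have bE (j : 'I_(n.*2)) : b j = brb H (phi (Some j)).
  apply/existsP/idP => [[j' /andP [/eqP /val_inj -> //]] | h]; by exists j; rewrite eqxx.
have rim i (ilt : i.+1 < n.*2) : Fcol (Some (Ordinal (ltnW ilt))) (Some (Ordinal ilt)) = Some true.
  by rewrite /Fcol /= eqxx.
have rim' i (ilt : i.+1 < n.*2) : Fcol (Some (Ordinal ilt)) (Some (Ordinal (ltnW ilt))) = Some true.
  by rewrite /Fcol /= eqxx orbT.
have nb i (ilt : i.+1 < n.*2) : ~~ brb (phi (Some (Ordinal (ltnW ilt)))) (phi (Some (Ordinal ilt))).
  exact: antip_br (hc _) (hc _) ((ha _ _ (rim _ ilt)).2).
have N0 : 0 < n.*2 by lia.
have NN : n.*2.-1 < n.*2 by lia.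
have b0 : b 0 = false.
  rewrite -[0]/(val (Ordinal N0)) bE; apply/negbTE.
  by apply: antip_br (hc _) (hc _) ((ha None (Some (Ordinal N0)) _).2); rewrite /Fcol /=.
have bN : b (n.*2.-1) = false.
  rewrite -[n.*2.-1]/(val (Ordinal NN)) bE; apply/negbTE.
  by apply: antip_br (hc _) (hc _) ((ha None (Some (Ordinal NN)) _).2); rewrite /Fcol /= eqxx orbT.
have [i [ilt nb1 nb2]] : exists i, [/\ i.+1 < n.*2, ~~ b i & ~~ b i.+1].
  apply: par_even => //; first by lia.
  move=> i ilt; rewrite -[i]/(val (Ordinal (ltnW ilt))) -[i.+1]/(val (Ordinal ilt)) !bE.
  apply/negP => /andP [h1 h2]; move/negP: (nb _ ilt); apply.
  exact: brb_trans (hc None) (brb_sym h1) h2.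
move: nb1 nb2; rewrite -[i]/(val (Ordinal (ltnW ilt))) -[i.+1]/(val (Ordinal ilt)) !bE => nb1 nb2.
case: (eqVneq i 0) => i0.
- have hdm : Fcol None (Some (Ordinal ilt)) = Some false.
    rewrite /Fcol /= i0; congr Some; lia.
  have nb' := antip_br (hc _) (hc _) ((ha _ _ (rim' _ ilt)).2).
  exact: (Lkey (hc None) (hc _) (hc _) nb2 nb1 nb' (attS _) (attS _)
     ((ha _ _ (rim' _ ilt)).1) ((hd _ _ hdm).2)).
- have hdm : Fcol None (Some (Ordinal (ltnW ilt))) = Some false.
    rewrite /Fcol /=; congr Some; move/eqP: i0; lia.
  exact: (Lkey (hc None) (hc _) (hc _) nb1 nb2 (nb _ ilt) (attS _) (attS _)
     ((ha _ _ (rim _ ilt)).1) ((hd _ _ hdm).2)).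
Qed.

Lemma main_sec : ~ full_antipodal_triangle e Q /\
    (forall k : nat, 1 <= k -> ~ contains_colored e (@W0col k) Q) /\
    (forall k : nat, 1 <= k -> ~ contains_colored e (@W1col k) Q) /\
    (forall n : nat, 2 <= n -> ~ contains_colored e (@Fcol n) Q).
Proof.
split; first exact: no_triangle.
split.
  move=> k k1; apply: wheel.
  - by move=> i j cij; rewrite /W0col cij.
  - by move=> j; exists false.
  - by move=> i j _; rewrite /W0col eqxx.
split; last exact: fan.
move=> k k1; apply: wheel.
- by move=> i j cij; rewrite /W1col cij.
- by move=> j; exists (val j == 0).
move=> i j; rewrite /W1col /cyc_adj.
case: (eqVneq (val i) 0) => i0; case: (eqVneq (val j) 0) => j0 //=.
rewrite i0 j0 modn_small //; lia.
Qed.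

End Main.

Unset Implicit Arguments.

Theorem lemma4p5 (V : finType) (e : rel V)
    (e_sym : symmetric e) (e_irr : irreflexive e) :
  connected_graph e -> chordal e ->
  (exists Q : {set V}, clique_separator e Q) ->
  path_graph e ->
  forall Q : {set V}, clique_separator e Q ->
    ~ full_antipodal_triangle e Q /\
    (forall k : nat, 1 <= k -> ~ contains_colored e (@W0col k) Q) /\
    (forall k : nat, 1 <= k -> ~ contains_colored e (@W1col k) Q) /\
    (forall n : nat, 2 <= n -> ~ contains_colored e (@Fcol n) Q).
Proof.
move=> _ _ _ [U [f [P [[fsym [firr [fconn nocyc]]] _ tpP hP]]]] Q [hQ hcard].
have [C CC] : exists C, C \in comps e Q.
  by apply/card_gt0P; apply: leq_trans hcard.
have [x _ _] := compP CC.
have [q0 q0Q] : exists q0, q0 \in Q.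
  apply: NNPP => none.
  have Q0 : Q = set0.
    by apply/setP => y; rewrite inE; apply/negP => yQ; apply: none; exists y.
  case: hQ => _ /(_ [set x]) H.
  have : [set x] = Q.
    apply: H; last by rewrite Q0 sub0set.
    split; first exact: subsetT.
    by move=> a b /set1P -> /set1P ->; rewrite eqxx.
  by move/setP/(_ x); rewrite Q0 set11 inE.
have [t tQ] : exists t, forall q, q \in Q -> t \in P q.
  apply: (helly fsym firr nocyc (Pf := P) q0Q) => [q _ | q q' qQ q'Q].
    exact: tpP.
  case: (eqVneq q q') => [<- | qq'].
    by rewrite setIid; have [u uq] := Pne tpP q; apply/set0Pn; exists u.
  by rewrite -hP //; apply: (Qc hQ).
exact: (main_sec e_sym e_irr fsym firr nocyc fconn tpP hP hQ tQ).
Qed.
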